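(* Let $(P,\lambda)$ be a marked poset which is strict and irredundant. If all inequalities describing the marked chain polytope $\mathcal{C}(P,\lambda)$ (in an irredundant description) are of the form $x_i\ge 0$ for $i\in P\setminus P^*$ or $\sum_{i\in I}x_i\le 1$ for subsets $I\subseteq P\setminus P^*$, then $\mathcal{C}(P,\lambda)$ is the chain polytope of some poset on the set $P\setminus P^*$.
   Context: A marked poset $(P,\lambda)$ is a finite poset $(P,\preceq)$ together with an induced subposet $P^*\subseteq P$ of marked elements and an order-preserving marking $\lambda:P^*\to\mathbb{R}$; it is always assumed that all minimal and all maximal elements of $P$ lie in $P^*$. It is strict if $\lambda(a)<\lambda(b)$ whenever $a\prec b$ in $P^*$, and irredundant (regular) if for every covering relation $p\prec q$ in $P$ and all $a,b\in P^*$ with $a\preceq q$ and $p\preceq b$, one has $a=b$ or $\lambda(a)<\lambda(b)$. The marked chain polytope $\mathcal{C}(P,\lambda)$ is the set of all $x\in\mathbb{R}_{\ge0}^{P\setminus P^*}$ with $x_{p_1}+\dots+x_{p_k}\le\lambda(b)-\lambda(a)$ for every maximal chain $a\prec p_1\prec\cdots\prec p_k\prec b$ in $P$ with $a,b\in P^*$ and $p_1,\dots,p_k\in P\setminus P^*$. The chain polytope of a finite poset $Q$ is the set of $x\in\mathbb{R}^Q$ with $x_c\ge0$ for all $c$ and $x_{c_1}+\dots+x_{c_k}\le 1$ for every chain $c_1\prec\cdots\prec c_k$ in $Q$. *)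

(* Defs.v *)
From HB Require Import structures.
From mathcomp Require Import all_boot all_order all_algebra.
Set Implicit Arguments. Unset Strict Implicit. Unset Printing Implicit Defensive.
Import Order.TTheory GRing.Theory Num.Theory.
Local Open Scope ring_scope.

(* Marked posets: the underlying finite poset is a finPOrderType P; the
   marked elements form a set Pstar : {set P}; the marking is a function
   lam : P -> R of which only the values on Pstar are relevant. *)

Definition unmarked (d : Order.disp_t) (P : finPOrderType d) (Pstar : {set P}) :=
  {p : P | p \notin Pstar}.

Definition covers (d : Order.disp_t) (P : finPOrderType d) (p q : P) : bool :=
  ((p < q) && [forall r : P, ~~ ((p < r) && (r < q))])%O.

Definition marked_poset (R : realFieldType) (d : Order.disp_t) (P : finPOrderType d)
    (Pstar : {set P}) (lam : P -> R) : Prop :=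
  [/\ forall a b : P, a \in Pstar -> b \in Pstar -> (a <= b)%O -> lam a <= lam b,
      forall p : P, (forall q : P, (q <= p)%O -> q = p) -> p \in Pstar
    & forall p : P, (forall q : P, (p <= q)%O -> q = p) -> p \in Pstar].

Definition strict_marked (R : realFieldType) (d : Order.disp_t) (P : finPOrderType d)
    (Pstar : {set P}) (lam : P -> R) : Prop :=
  forall a b : P, a \in Pstar -> b \in Pstar -> (a < b)%O -> lam a < lam b.

(* irredundant (regular) marked poset *)
Definition regular_marked (R : realFieldType) (d : Order.disp_t) (P : finPOrderType d)
    (Pstar : {set P}) (lam : P -> R) : Prop :=
  forall p q : P, covers p q ->
  forall a b : P, a \in Pstar -> b \in Pstar -> (a <= q)%O -> (p <= b)%O ->
    a = b \/ lam a < lam b.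

Definition marked_chain_polytope (R : realFieldType) (d : Order.disp_t)
    (P : finPOrderType d) (Pstar : {set P}) (lam : P -> R)
    (x : unmarked Pstar -> R) : Prop :=
  (forall p, 0 <= x p) /\
  forall (a b : P) (ps : seq (unmarked Pstar)),
    a \in Pstar -> b \in Pstar ->
    path (@covers d P) a (rcons (map val ps) b) ->
    \sum_(p <- ps) x p <= lam b - lam a.

Inductive ineq (Q : finType) :=
  | Ineq_nonneg of Q
  | Ineq_sumle of {set Q}.

Definition sat_ineq (R : realFieldType) (Q : finType) (x : Q -> R) (h : ineq Q) : Prop :=
  match h with
  | Ineq_nonneg i => 0 <= x i
  | Ineq_sumle J => \sum_(i in J) x i <= 1
  end.

Definition irredundant_description (R : realFieldType) (Q : finType)
    (C : (Q -> R) -> Prop) (m : nat) (D : 'I_m -> ineq Q) : Prop :=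
  (forall x, C x <-> forall k, sat_ineq x (D k)) /\
  (forall j : 'I_m, exists x : Q -> R,
      (forall k, k != j -> sat_ineq x (D k)) /\ ~ sat_ineq x (D j)).

Definition is_porder (Q : finType) (r : rel Q) : Prop :=
  [/\ reflexive r, antisymmetric r & transitive r].

Definition is_chain (Q : finType) (r : rel Q) (S : {set Q}) : Prop :=
  {in S &, forall a b, r a b \/ r b a}.

Definition chain_polytope (R : realFieldType) (Q : finType) (r : rel Q) (x : Q -> R) : Prop :=
  (forall c, 0 <= x c) /\
  forall S : {set Q}, is_chain r S -> \sum_(c in S) x c <= 1.

Arguments marked_chain_polytope {R d P} Pstar lam x.

(* Main.v *)
Require Import Defs.
From HB Require Import structures.
From mathcomp Require Import all_boot all_order all_algebra.
From mathcomp Require Import ring lra.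
Import Order.TTheory GRing.Theory Num.Theory.
Local Open Scope ring_scope.
Set Implicit Arguments. Unset Strict Implicit.

Section Basic.
Variables (d : Order.disp_t) (P : finPOrderType d).

Lemma covers_lt (p q : P) : covers p q -> (p < q)%O.
Proof. by case/andP. Qed.

Lemma covers_between (p q z : P) : covers p q -> (p <= z)%O -> (z <= q)%O ->
  z = p \/ z = q.
Proof.
case/andP=> _ /forallP H; rewrite le_eqVlt => /orP[/eqP->|pz]; first by left.
rewrite le_eqVlt => /orP[/eqP->|zq]; first by right.
by move: (H z); rewrite pz zq.
Qed.

Lemma path_lt (a : P) s : path (@covers d P) a s -> path (<%O) a s.
Proof. by apply: sub_path => x y /covers_lt. Qed.

End Basic.

Section Main.
Variables (R : realFieldType) (d : Order.disp_t) (P : finPOrderType d)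
  (Pstar : {set P}) (lam : P -> R).
Local Notation U := (unmarked Pstar).
Hypotheses (Hmp : marked_poset Pstar lam) (Hst : strict_marked Pstar lam)
  (Hreg : regular_marked Pstar lam).

Lemma lam_mono (a b : P) : a \in Pstar -> b \in Pstar -> (a <= b)%O -> lam a <= lam b.
Proof. by case: Hmp => H _ _; apply: H. Qed.

Lemma reg_le (p q a b : P) : covers p q -> a \in Pstar -> b \in Pstar ->
  (a <= q)%O -> (p <= b)%O -> lam a <= lam b.
Proof.
move=> c aS bS aq pb; case: (Hreg c aS bS aq pb) => [->|/ltW //]; exact: lexx.
Qed.

Lemma pot_C (z : U -> R) (F : P -> R) :
  (forall u, 0 <= z u) ->
  (forall m, m \in Pstar -> F m = lam m) ->
  (forall (u : P) (v : U), covers u (val v) -> F u + z v <= F (val v)) ->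
  (forall u v, covers u v -> v \in Pstar -> F u <= F v) ->
  marked_chain_polytope Pstar lam z.
Proof.
move=> z0 Fm Fu Fv; split=> // a b ps aS bS.
suff H : forall a, path (@covers d P) a (rcons (map val ps) b) ->
   F a + \sum_(p <- ps) z p <= F b.
  by move=> /H; rewrite (Fm a aS) (Fm b bS) lerBrDl.
elim: ps => [|p ps IH] a0 /=.
  by rewrite big_nil addr0 andbT => /Fv; apply.
move=> /andP[c pth]; rewrite big_cons.
have := Fu _ _ c; have := IH _ pth; lra.
Qed.

Section Chain.
Variables (a b : P) (ps : seq U) (u0 : U).
Hypotheses (aS : a \in Pstar) (bS : b \in Pstar)
  (pth : path (@covers d P) a (rcons (map val ps) b)) (ps0 : (0 < size ps)%N).

Local Notation k := (size ps).
Definition L i := nth a (a :: rcons (map val ps) b) i.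

Lemma Lcov i : (i <= k)%N -> covers (L i) (L i.+1).
Proof.
move=> ik; move/(pathP a): pth => /(_ i); rewrite size_rcons size_map ltnS.
by move=> /(_ ik).
Qed.

Lemma L0 : L 0 = a. Proof. by []. Qed.
Lemma Lk : L k.+1 = b.
Proof. by rewrite /L /= nth_rcons size_map ltnn eqxx. Qed.

Lemma Lmono i j : (i <= j)%N -> (j <= k.+1)%N -> (L i <= L j)%O.
Proof.
move=> ij jk.
have so : sorted (<=%O) (a :: rcons (map val ps) b).
  by apply: (sub_path (fun x y (h : (x < y)%O) => ltW h)); apply: path_lt.
apply: (sorted_leq_nth le_trans lexx a so) => //; rewrite inE /= size_rcons size_map ltnS //.
exact: leq_trans ij jk.
Qed.

Lemma Lunm i : (0 < i)%N -> (i <= k)%N -> L i \notin Pstar.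
Proof.
case: i => // i _ ik; rewrite /L /= nth_rcons size_map ik.
have : nth a (map val ps) i \in map val ps by rewrite mem_nth // size_map.
by case/mapP=> u _ ->; apply: (valP u).
Qed.

Lemma uniq_ps : uniq ps.
Proof.
have : sorted (<%O) (a :: rcons (map val ps) b) by apply: path_lt.
move/(sorted_uniq lt_trans ltxx); rewrite cons_uniq rcons_uniq => /and3P[_ _].
by rewrite (map_inj_uniq val_inj).
Qed.

Lemma Lval u : u \in ps -> L (index u ps).+1 = val u.
Proof.
move=> uin; rewrite /L /= nth_rcons size_map index_mem uin.
by rewrite (nth_map u) ?index_mem // nth_index.
Qed.

Lemma index_lt u : u \in ps -> (index u ps < k)%N.
Proof. by rewrite index_mem. Qed.

Lemma aL i : (i <= k.+1)%N -> (a <= L i)%O.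
Proof. by move=> ik; rewrite -L0; apply: Lmono. Qed.
Lemma Lb i : (i <= k.+1)%N -> (L i <= b)%O.
Proof. by move=> ik; rewrite -Lk; apply: Lmono. Qed.

Definition Aup (x : P) := \big[Order.max/lam a]_(m | (m \in Pstar) && (m <= x)%O) lam m.
Definition Bdn (x : P) := \big[Order.min/lam b]_(m | (m \in Pstar) && (x <= m)%O) lam m.

Lemma Aup_ub x m : m \in Pstar -> (m <= x)%O -> lam m <= Aup x.
Proof. by move=> mS mx; apply: le_bigmax_cond; rewrite mS mx. Qed.
Lemma Aup_le x c : lam a <= c -> (forall m, m \in Pstar -> (m <= x)%O -> lam m <= c) ->
  Aup x <= c.
Proof. by move=> h1 h2; apply: bigmax_le => // m /andP[]; apply: h2. Qed.
Lemma Bdn_lb x m : m \in Pstar -> (x <= m)%O -> Bdn x <= lam m.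
Proof. by move=> mS mx; apply: bigmin_le_cond; rewrite mS mx. Qed.
Lemma Bdn_ge x c : c <= lam b -> (forall m, m \in Pstar -> (x <= m)%O -> c <= lam m) ->
  c <= Bdn x.
Proof. by move=> h1 h2; apply: le_bigmin => // m /andP[]; apply: h2. Qed.

Lemma ab_le : lam a <= lam b.
Proof. apply: lam_mono => //; exact: (le_trans (aL (leqnn _)) (Lb (leqnn _))). Qed.

Lemma AB i : (i <= k)%N -> Aup (L i.+1) <= Bdn (L i).
Proof.
move=> ik; apply: Aup_le.
  apply: Bdn_ge; first exact: ab_le.
  move=> m mS Lm; apply: lam_mono => //; apply: le_trans Lm; apply: aL.
  exact: leq_trans ik (leqnSn _).
move=> m mS mL; apply: Bdn_ge.
  apply: lam_mono => //; apply: le_trans mL _; apply: Lb; exact: ik.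
by move=> m' m'S Lm'; apply: (reg_le (Lcov ik)).
Qed.

Lemma AB_lt i : (0 < i)%N -> (i < k)%N -> Aup (L i.+1) < Bdn (L i).
Proof.
move=> i0 ik; have ik' := ltnW ik.
have Li := Lunm i0 ik'; have Li1 := Lunm (ltn0Sn i) ik.
apply: bigmax_lt.
  apply: lt_bigmin.
    apply: Hst => //; apply: (@lt_le_trans _ _ (L i.+1)); last exact: Lb (leqW ik).
    rewrite lt_neqAle (aL (leqW ik)) andbT; apply/eqP=> e.
    by move: Li1; rewrite -e aS.
  move=> m /andP[mS Lm]; apply: Hst => //; apply: lt_le_trans Lm.
  rewrite lt_neqAle (aL (leqW ik')) andbT; apply/eqP=> e.
  by move: Li; rewrite -e aS.
move=> m /andP[mS mL]; apply: lt_bigmin.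
  apply: Hst => //; apply: lt_le_trans (Lb (leqW ik)).
  rewrite lt_neqAle mL andbT; apply/eqP=> e; by move: Li1; rewrite -e mS.
move=> m' /andP[m'S Lm'].
case: (Hreg (Lcov ik') mS m'S mL Lm') => // e.
subst m'; case: (covers_between (Lcov ik') Lm' mL) => e.
  by move: Li; rewrite -e mS.
by move: Li1; rewrite -e mS.
Qed.

Definition gam i := (Aup (L i.+1) + Bdn (L i)) / 2.
Definition yf (g : nat -> R) (u : U) :=
  if u \in ps then g (index u ps).+1 - g (index u ps) else 0.

Lemma yC (g : nat -> R) :
  (forall i, (i < k)%N -> g i <= g i.+1) ->
  (forall i, (i <= k)%N -> Aup (L i.+1) <= g i) ->
  (forall i, (i <= k)%N -> g i <= Bdn (L i)) ->
  marked_chain_polytope Pstar lam (yf g).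
Proof.
move=> gm gA gB.
have gmono : forall i j, (i <= j)%N -> (j <= k)%N -> g i <= g j.
  move=> i j ij; elim: j ij => [|j IH]; first by rewrite leqn0 => /eqP-> _; exact: lexx.
  rewrite leq_eqVlt => /orP[/eqP-> _|]; first exact: lexx.
  rewrite ltnS => ij jk.
  exact: le_trans (IH ij (ltnW jk)) (gm _ jk).
set l0 := Order.min (g 0) (\big[Order.min/g 0]_(m | m \in Pstar) lam m).
have l0g : forall i, (i <= k)%N -> l0 <= g i.
  move=> i ik; apply: le_trans (gmono 0%N i (leq0n _) ik).
  by rewrite ge_min lexx.
have l0m : forall m, m \in Pstar -> l0 <= lam m.
  move=> m mS; rewrite ge_min; apply/orP; right; exact: bigmin_le_cond.
pose F (x : P) := Order.max (\big[Order.max/l0]_(m | (m \in Pstar) && (m <= x)%O) lam m)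
   (\big[Order.max/l0]_(i < k | (L i.+1 <= x)%O) g i.+1).
have Fmono : forall x y, (x <= y)%O -> F x <= F y.
  move=> x y xy; rewrite ge_max; apply/andP; split; rewrite le_max; apply/orP; [left|right];
  (apply: bigmax_le; [exact: bigmax_ge_id|]).
  - move=> m /andP[mS mx]; apply: le_bigmax_cond; rewrite mS (le_trans mx xy) //.
  - move=> i Li; apply: le_bigmax_cond; exact: le_trans Li xy.
apply: (pot_C (F := F)).
- move=> u; rewrite /yf; case: ifP => uin; last exact: lexx.
  rewrite subr_ge0; apply: gm; exact: index_lt.
- move=> m mS; apply/le_anti/andP; split.
    rewrite ge_max; apply/andP; split; apply: bigmax_le; try exact: l0m.
      by move=> m' /andP[m'S m'm]; apply: lam_mono.
    move=> i Lm; exact: le_trans (gB _ (ltn_ord i)) (Bdn_lb mS Lm).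
  rewrite le_max; apply/orP; left; apply: le_bigmax_cond; rewrite mS lexx //.
- move=> u v c; rewrite /yf; case: ifP => vin.
    have jk := index_lt vin; have Lj := Lval vin.
    move: jk Lj; set j := index v ps => jk Lj.
    have h1 : g j.+1 <= F (val v).
      rewrite le_max; apply/orP; right; apply: (@le_bigmax_cond _ _ _ _ (Ordinal jk)) => /=.
      by rewrite Lj lexx.
    have h2 : F u <= g j.
      rewrite ge_max; apply/andP; split; apply: bigmax_le; try exact: l0g (ltnW jk).
        move=> m /andP[mS mu]; apply: le_trans (gA _ (ltnW jk)); apply: Aup_ub mS _.
        rewrite Lj; exact: le_trans mu (ltW (covers_lt c)).
      move=> i Lu; apply: gmono; last exact: ltnW jk.
      rewrite ltnNge; apply/negP => ji.
      have h : (L j.+1 <= L i.+1)%O by apply: Lmono; [rewrite ltnS | exact: leqW (ltn_ord i)].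
      have : (val v < val v)%O.
        rewrite -{1}Lj; exact: le_lt_trans h (le_lt_trans Lu (covers_lt c)).
      by rewrite ltxx.
    lra.
  rewrite addr0; apply: Fmono; exact: ltW (covers_lt c).
- move=> u v c vS; apply: Fmono; exact: ltW (covers_lt c).
Qed.

Lemma sum_yf g : \sum_(u <- ps) yf g u = g k - g 0.
Proof.
rewrite (big_nth u0) -(telescope_sumr _ (leq0n k)); apply: eq_big_nat => i /andP[_ ik].
by rewrite /yf mem_nth // index_uniq // uniq_ps.
Qed.

Lemma gam_mono i : (i < k)%N -> gam i <= gam i.+1.
Proof.
move=> ik; rewrite /gam.
have h1 : Aup (L i.+1) <= Aup (L i.+2).
  apply: Aup_le; first by apply: Aup_ub aS _; apply: aL.
  move=> m mS mL; apply: Aup_ub mS _; apply: le_trans mL _; exact: Lmono.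
have h2 : Bdn (L i) <= Bdn (L i.+1).
  apply: Bdn_ge; first by apply: Bdn_lb bS _; apply: Lb; exact: leqW (ltnW ik).
  move=> m mS Lm; apply: Bdn_lb mS _; apply: le_trans Lm; apply: Lmono => //.
  exact: leqW ik.
lra.
Qed.

Lemma gam_A i : (i <= k)%N -> Aup (L i.+1) <= gam i.
Proof. move=> ik; have := AB ik; rewrite /gam; lra. Qed.
Lemma gam_B i : (i <= k)%N -> gam i <= Bdn (L i).
Proof. move=> ik; have := AB ik; rewrite /gam; lra. Qed.

Lemma gam0 : gam 0 = lam a.
Proof.
have h1 : Aup (L 1) = lam a.
  apply/le_anti/andP; split; last by apply: Aup_ub aS _; apply: aL.
  apply: Aup_le; first exact: lexx.
  move=> m mS mL; apply: (reg_le (Lcov (leq0n k))) => //; exact: lexx.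
have h2 : Bdn (L 0) = lam a.
  apply/le_anti/andP; split; first by apply: Bdn_lb aS _; exact: lexx.
  apply: Bdn_ge; first exact: ab_le.
  by move=> m mS am; apply: lam_mono.
rewrite /gam h1 h2; lra.
Qed.

Lemma gamk : gam k = lam b.
Proof.
have h1 : Aup (L k.+1) = lam b.
  apply/le_anti/andP; split; last by apply: Aup_ub bS _; rewrite Lk.
  apply: Aup_le; first exact: ab_le.
  by move=> m mS mL; apply: lam_mono => //; rewrite -Lk.
have h2 : Bdn (L k) = lam b.
  apply/le_anti/andP; split; first by apply: Bdn_lb bS _; apply: Lb; exact: leqnSn.
  apply: Bdn_ge; first exact: lexx.
  move=> m mS Lm; apply: (reg_le (Lcov (leqnn k))) => //; rewrite Lk; exact: lexx.
rewrite /gam h1 h2; lra.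
Qed.

Lemma index_eq u v : u \in ps -> v \in ps -> (index u ps == index v ps) = (u == v).
Proof.
move=> uin vin; apply/eqP/eqP => [h|-> //].
by rewrite -(nth_index u0 uin) h nth_index.
Qed.

Lemma sdiff (l i : nat) : ((l <= i.+1)%N%:R - (l <= i)%N%:R : R) = (l == i.+1)%:R.
Proof.
rewrite leq_eqVlt ltnS; case: (eqVneq l i.+1) => [->|ne] /=.
  by rewrite ltnn subr0.
by rewrite subrr.
Qed.

Lemma ML m (D : 'I_m -> ineq U) :
  (forall x, marked_chain_polytope Pstar lam x <-> forall j, sat_ineq x (D j)) ->
  lam b - lam a = 1.
Proof.
move=> HD.
set y := yf gam.
have yCC : marked_chain_polytope Pstar lam y.
  apply: yC; [exact: gam_mono | exact: gam_A | exact: gam_B].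
have ysum : \sum_(u <- ps) y u = lam b - lam a by rewrite sum_yf gamk gam0.
have ab : (a < b)%O.
  have Lu := Lunm (ltn0Sn 0) ps0.
  apply: (@lt_le_trans _ _ (L 1)); last exact: Lb.
  rewrite lt_neqAle (aL _) // andbT; apply/eqP=> e; by move: Lu; rewrite -e aS.
have cpos : 0 < lam b - lam a by rewrite subr_gt0; apply: Hst.
have y0 : forall u, 0 <= y u by case: yCC.
have ysat := (proj1 (HD y) yCC).
pose vl j := if D j is Ineq_sumle J then \sum_(i in J) y i else 0.
case: (boolP [exists j, vl j == 1]) => [/existsP[j]|/existsPn nt]; last first.
  have vlt : forall j, vl j < 1.
    move=> j; have := ysat j; have := nt j; unfold vl; case: (D j) => [i|J] /=.
      by move=> _ _; exact: ltr01.
    by move=> h1 h2; rewrite lt_neqAle h1 h2.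
  set M := \big[Order.max/0]_(j < m) vl j.
  have M0 : 0 <= M by exact: bigmax_ge_id.
  have M1 : M < 1 by apply: bigmax_lt => [|j _]; [exact: ltr01 | exact: vlt].
  have vM : forall j, vl j <= M by move=> j; exact: le_bigmax.
  set t := 2 / (1 + M).
  have tpos : 0 < t by rewrite /t divr_gt0 //; lra.
  have e : t * (1 + M) = 2 by rewrite /t divfK //; apply/eqP => h; lra.
  have t1 : 1 < t by nra.
  have tM : t * M <= 1 by nra.
  have tyC : marked_chain_polytope Pstar lam (fun u => t * y u).
    apply/HD => j; have := vM j; have := ysat j; unfold vl; case: (D j) => [i|J] /=.
      move=> h _; apply: mulr_ge0 => //; exact: ltW.
    move=> _ h; rewrite -mulr_sumr; apply: le_trans tM; apply: ler_wpM2l => //; exact: ltW.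
  have := (proj2 tyC) a b ps aS bS pth; rewrite -mulr_sumr ysum => h; nra.
unfold vl; case E: (D j) => [i|J].
  by move=> /eqP h; move: (@ltr01 R); rewrite -h ltxx.
move=> /eqP Jsum.
case: (boolP [forall u, ((u \in ps) && (u \notin J)) ==> (y u == 0)]) => [/forallP H | /forallPn [p]].
  have : \sum_(u <- ps) y u = \sum_(i in J) y i.
    rewrite big_uniq ?uniq_ps // [RHS]big_mkcond [LHS]big_mkcond; apply: eq_bigr => u _.
    case uJ: (u \in J); case up: (u \in ps) => //.
      by rewrite /y /yf up.
    by have := H u; rewrite up uJ /= => /eqP.
  by rewrite ysum Jsum.
rewrite negb_imply => /andP[/andP[pin pJ] yp0].
have ypos : 0 < y p by rewrite lt_neqAle eq_sym yp0 y0.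
have [q qJ yq0] : exists2 q, q \in J & y q != 0.
  case: (boolP [exists q in J, y q != 0]) => [/exists_inP [q ? ?]|/exists_inPn H].
    by exists q.
  move: Jsum; rewrite big1 => [h|i iJ]; first by move: (@ltr01 R); rewrite h ltxx.
  by have := H i iJ; rewrite negbK => /eqP.
have qin : q \in ps by move: yq0; rewrite /y /yf; case: ifP => // _; rewrite eqxx.
have pq : p != q by apply/eqP => e'; move: pJ; rewrite e' qJ.
set lp := (index p ps).+1; set lq := (index q ps).+1.
pose s i : R := (lq <= i)%N%:R - (lp <= i)%N%:R.
pose gap i := (Bdn (L i) - Aup (L i.+1)) / 2.
pose del := \big[Order.min/y p]_(i < k | (0 < i)%N) gap i.
have delp : 0 < del.
  apply: lt_bigmin => // i i0; rewrite /gap; have := AB_lt i0 (ltn_ord i); lra.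
have dely : del <= y p by exact: bigmin_le_id.
have delg : forall i, (0 < i)%N -> (i < k)%N -> del <= gap i.
  by move=> i i0 ik; apply: (@bigmin_le_cond _ _ _ _ (Ordinal ik)).
pose g' i := gam i + del * s i.
have sd : forall i, s i.+1 = s i + ((lq == i.+1)%:R - (lp == i.+1)%:R).
  by move=> i; rewrite -!sdiff /s; ring.
have sB : forall i, (i <= k)%N -> s i = 0 \/
    ((0 < i)%N && (i < k)%N /\ (s i = 1 \/ s i = -1)).
  move=> i ik; rewrite /s; case: (posnP i) => [->|i0].
    by left; rewrite /lq /lp !ltn0 subrr.
  move: ik; rewrite leq_eqVlt => /orP[/eqP ->|ik].
    by left; rewrite /lq /lp (index_lt qin) (index_lt pin) subrr.
  have i0k : (0 < i)%N && (i < k)%N by rewrite i0 ik.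
  case: (lq <= i)%N; case: (lp <= i)%N => /=; rewrite ?mulr1n ?mulr0n ?subrr ?subr0 ?sub0r.
  - by left.
  - by right; split => //; left.
  - by right; split => //; right.
  - by left.
have g'C : marked_chain_polytope Pstar lam (yf g').
  apply: yC.
  - move=> i ik; rewrite /g' sd; move: (s i) => si; rewrite mulrDr; have gm := gam_mono ik.
    have e' : (lp == i.+1) -> del <= gam i.+1 - gam i.
      move/eqP; rewrite /lp => [[ei]]; apply: le_trans dely _.
      by rewrite /y /yf pin ei.
    move: e'; case: (lq == i.+1); case: (lp == i.+1) => /= e';
      rewrite ?mulr1n ?mulr0n ?subr0 ?sub0r ?subrr ?mulr0 ?mulr1 ?mulrN1 ?addr0; try have := e' erefl; lra.
  - move=> i ik; rewrite /g'; have := gam_A ik.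
    case: (sB i ik) => [->|[/andP[i0 ik'] [->|->]]]; first by rewrite mulr0 addr0.
      rewrite mulr1 => h; lra.
    have := delg i i0 ik'; rewrite /gap /gam; lra.
  - move=> i ik; rewrite /g'; have := gam_B ik.
    case: (sB i ik) => [->|[/andP[i0 ik'] [->|->]]]; first by rewrite mulr0 addr0.
      have := delg i i0 ik'; rewrite /gap /gam; lra.
    rewrite mulrN1 => h; lra.
have y'sat := proj1 (HD _) g'C j; rewrite E /= in y'sat.
have y'e : forall u, yf g' u = y u + del * ((u == q)%:R - (u == p)%:R).
  move=> u; rewrite /y /yf; case: ifP => uin.
    rewrite /g' sd /lq /lp !eqSS !index_eq // ![_ == u]eq_sym; ring.
  have -> : (u == q) = false by apply/negbTE/eqP => e'; move: uin; rewrite e' qin.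
  have -> : (u == p) = false by apply/negbTE/eqP => e'; move: uin; rewrite e' pin.
  by rewrite subrr mulr0 addr0.
move: y'sat; under eq_bigr do rewrite y'e.
rewrite big_split /= Jsum -mulr_sumr sumrB.
rewrite (bigD1 q) //= eqxx big1 ?addr0; last first.
  by move=> i /andP[_ /negbTE ->].
rewrite big1; last first.
  by move=> i iJ; case: eqP => // e'; move: pJ; rewrite -e' iJ.
rewrite subr0 mulr1n; lra.
Qed.

End Chain.
Definition cov' : rel U := fun x y => covers (val x) (val y).
Definition rr : rel U := connect cov'.

Lemma rr_le x y : rr x y -> (val x <= val y)%O.
Proof.
move=> /connectP[p pth ->]; elim: p x pth => [|z p IH] x /=; first by move=> _; exact: lexx.
move=> /andP[c pth]; exact: le_trans (ltW (covers_lt c)) (IH _ pth).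
Qed.

Lemma cover_below (u : P) : forall q, (q < u)%O -> exists2 w, (q <= w)%O & covers w u.
Proof.
move=> q; move: {2}_.+1 (ltnSn #|[set z | (q < z)%O && (z < u)%O]|) => n.
elim: n q => // n IH q Hn qu.
case: (boolP [forall r, ~~ ((q < r)%O && (r < u)%O)]) => [H|/forallPn [r]].
  by exists q => //; rewrite /covers qu.
rewrite negbK => /andP[qr ru].
have [w rw c] : exists2 w, (r <= w)%O & covers w u.
  refine (IH r _ ru); rewrite ltnS in Hn; apply: leq_trans (proper_card _) Hn.
  apply/properP; split.
    by apply/subsetP => z; rewrite !inE => /andP[rz zu]; rewrite (lt_trans qr rz) zu.
  by exists r; rewrite !inE ?ltxx //=; apply/andP; split.
by exists w => //; exact: le_trans (ltW qr) rw.
Qed.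

Lemma cover_above (u : P) : forall q, (u < q)%O -> exists2 w, covers u w & (w <= q)%O.
Proof.
move=> q; move: {2}_.+1 (ltnSn #|[set z | (u < z)%O && (z < q)%O]|) => n.
elim: n q => // n IH q Hn uq.
case: (boolP [forall r, ~~ ((u < r)%O && (r < q)%O)]) => [H|/forallPn [r]].
  by exists q => //; rewrite /covers uq.
rewrite negbK => /andP[ur rq].
have [w c wr] : exists2 w, covers u w & (w <= r)%O.
  refine (IH r _ ur); rewrite ltnS in Hn; apply: leq_trans (proper_card _) Hn.
  apply/properP; split.
    by apply/subsetP => z; rewrite !inE => /andP[uz zr]; rewrite (lt_trans zr rq) uz.
  by exists r; rewrite !inE ?ltxx ?andbF //=; apply/andP; split.
by exists w => //; exact: le_trans wr (ltW rq).
Qed.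

Lemma down_ex (u : U) : exists a (ps : seq U), a \in Pstar /\
  path (@covers d P) a (rcons (map val ps) (val u)).
Proof.
move: {2}_.+1 (ltnSn #|[set z | (z < val u)%O]|) => n; elim: n u => // n IH u Hn.
have [q qu] : exists q, (q < val u)%O.
  case: (boolP [exists q, (q < val u)%O]) => [/existsP[q ?]|/existsPn H]; first by exists q.
  have : val u \in Pstar.
    case: Hmp => _ Hmin _; apply: Hmin => q qu; apply/eqP; apply: contraT => ne.
    by have := H q; rewrite lt_neqAle ne qu.
  by rewrite (negbTE (valP u)).
have [w _ c] := cover_below qu.
case: (boolP (w \in Pstar)) => wS.
  by exists w, [::]; split => //=; rewrite c.
have [a [ps [aS pth]]] : exists a (ps : seq U), a \in Pstar /\
    path (@covers d P) a (rcons (map val ps) w).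
  apply: (IH (exist _ w wS)); rewrite ltnS in Hn; apply: leq_trans (proper_card _) Hn.
  apply/properP; split.
    by apply/subsetP => z; rewrite !inE /= => zw; exact: lt_trans zw (covers_lt c).
  by exists w; rewrite !inE /= ?ltxx ?(covers_lt c).
exists a, (rcons ps (exist _ w wS)); split => //.
by rewrite map_rcons rcons_path pth last_rcons /= c.
Qed.

Lemma up_ex (u : U) : exists b (ps : seq U), b \in Pstar /\
  path (@covers d P) (val u) (rcons (map val ps) b).
Proof.
move: {2}_.+1 (ltnSn #|[set z | (val u < z)%O]|) => n; elim: n u => // n IH u Hn.
have [q uq] : exists q, (val u < q)%O.
  case: (boolP [exists q, (val u < q)%O]) => [/existsP[q ?]|/existsPn H]; first by exists q.
  have : val u \in Pstar.
    case: Hmp => _ _ Hmax; apply: Hmax => q uq; apply/eqP; apply: contraT => ne.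
    by have := H q; rewrite lt_neqAle eq_sym ne uq.
  by rewrite (negbTE (valP u)).
have [w c _] := cover_above uq.
case: (boolP (w \in Pstar)) => wS.
  by exists w, [::]; split => //=; rewrite c.
have [b [ps [bS pth]]] : exists b (ps : seq U), b \in Pstar /\
    path (@covers d P) w (rcons (map val ps) b).
  apply: (IH (exist _ w wS)); rewrite ltnS in Hn; apply: leq_trans (proper_card _) Hn.
  apply/properP; split.
    by apply/subsetP => z; rewrite !inE /= => wz; exact: lt_trans (covers_lt c) wz.
  by exists w; rewrite !inE /= ?ltxx ?(covers_lt c).
exists b, (exist _ w wS :: ps); split => //.
by rewrite /= c pth.
Qed.

Lemma chain_top (S : {set U}) : is_chain rr S -> S != set0 ->
  exists2 u, u \in S & forall s, s \in S -> rr s u.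
Proof.
move=> ch /set0Pn[w0 w0S].
pose h (x : U) := #|[set z : P | (z < val x)%O]|.
case: (@arg_maxnP _ w0 (fun x => x \in S) h w0S) => u uS umax.
exists u => // s sS.
case: (ch s u sS uS) => // us.
case: (eqVneq s u) => [->|ne]; first exact: connect0.
have lt : (val u < val s)%O.
  rewrite lt_neqAle (rr_le us) andbT; apply/eqP => e.
  by move/val_inj: e => e; rewrite e eqxx in ne.
have hle : (h s <= h u)%N := umax s sS; move: hle; rewrite leqNgt => /negP; elim; apply: proper_card.
apply/properP; split.
  by apply/subsetP => z; rewrite !inE => zu; exact: lt_trans zu lt.
by exists (val u); rewrite !inE ?lt ?ltxx.
Qed.

Lemma base_chain (u : U) (S : {set U}) : S :\ u = set0 ->
  exists a (ps : seq U), [/\ a \in Pstar, path (@covers d P) a (rcons (map val ps) (val u))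
    & forall s, s \in S -> s \in rcons ps u].
Proof.
move=> S1; have [a [ps [aS pth]]] := down_ex u.
exists a, ps; split => // s sS.
have : s \notin S :\ u by rewrite S1 inE.
by rewrite !inE sS andbT negbK => /eqP ->; rewrite mem_rcons inE eqxx.
Qed.

Lemma down_chain n (u : U) (S : {set U}) : (#|S| <= n)%N -> is_chain rr S ->
  (forall s, s \in S -> rr s u) ->
  exists a (ps : seq U), [/\ a \in Pstar, path (@covers d P) a (rcons (map val ps) (val u))
    & forall s, s \in S -> s \in rcons ps u].
Proof.
elim: n u S => [|n IH] u S Sn ch Su; case: (eqVneq (S :\ u) set0) => S1;
  try exact: base_chain.
  move: Sn; rewrite leqn0 cards_eq0 => /eqP S0.
  by move: S1; rewrite S0 set0D eqxx.
have ch1 : is_chain rr (S :\ u).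
  by move=> x y /setD1P[_ xS] /setD1P[_ yS]; exact: ch.
have [w wS1 wtop] := chain_top ch1 S1.
have wS : w \in S by move: wS1 => /setD1P[].
have wu : w != u by move: wS1 => /setD1P[].
have [|||a [ps1 [aS pth1 mem1]]] := IH w (S :\ u :\ w).
- rewrite -ltnS; apply: leq_trans (proper_card _) Sn.
  apply/properP; split.
    by apply/subsetP => z /setD1P[_ /setD1P[_ ->]].
  by exists w => //; rewrite !inE eqxx.
- by move=> x y /setD1P[_ xS] /setD1P[_ yS]; exact: ch1.
- by move=> s /setD1P[_ sS]; exact: wtop.
have /connectP[p pthp ul] := Su w wS.
exists a, (ps1 ++ belast w p); split => //.
  rewrite map_cat rcons_cat ul -map_rcons -lastI /= -cat_rcons cat_path pth1 last_rcons.
  by rewrite path_map.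
move=> s sS; rewrite rcons_cat ul -lastI mem_cat.
case: (eqVneq s u) => [->|su].
  by rewrite ul mem_last orbT.
case: (eqVneq s w) => [->|sw]; first by rewrite inE eqxx orbT.
have := mem1 s; rewrite !inE su sw sS /= => /(_ isT).
by rewrite mem_rcons inE (negbTE sw) /= => ->.
Qed.

Lemma sorted_chain (s : seq U) : sorted cov' s -> {in s &, forall u v, rr u v \/ rr v u}.
Proof.
elim: s => // x s IH /= pth u v; rewrite !inE => /orP[/eqP->|us] /orP[/eqP->|vs].
- by left; exact: connect0.
- by left; apply: (path_connect pth); rewrite inE vs orbT.
- by right; apply: (path_connect pth); rewrite inE us orbT.
- exact: IH (path_sorted pth) _ _ us vs.
Qed.

Lemma main_sec :
  (exists (m : nat) (D : 'I_m -> ineq U),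
      irredundant_description (marked_chain_polytope Pstar lam) D) ->
  exists r : rel U, is_porder r /\
    forall x : U -> R, marked_chain_polytope Pstar lam x <-> chain_polytope r x.
Proof.
case=> m [D [HD _]]; exists rr; split.
  split.
  - move=> x; exact: connect0.
  - move=> x y /andP[h1 h2]; apply: val_inj; apply: le_anti; rewrite (rr_le h1) (rr_le h2).
    done.
  - move=> y x z; exact: connect_trans.
move=> x; split.
  move=> Cx; have x0 := proj1 Cx; split => // S ch.
  case: (eqVneq S set0) => [->|S0]; first by rewrite big_set0 ler01.
  have [u uS top] := chain_top ch S0.
  have [a [ps1 [aS pth1 mem1]]] := down_chain (leqnn _) ch top.
  have [b [ps2 [bS pth2]]] := up_ex u.
  pose ps := rcons ps1 u ++ ps2.
  have pth : path (@covers d P) a (rcons (map val ps) b).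
    by rewrite /ps map_cat map_rcons rcons_cat cat_path pth1 last_rcons.
  have ps0 : (0 < size ps)%N by rewrite /ps size_cat size_rcons.
  have e1 := @ML a b ps u aS bS pth ps0 m D HD.
  have := (proj2 Cx) a b ps aS bS pth; rewrite e1; apply: le_trans.
  rewrite big_uniq ?(uniq_ps pth) // [X in _ <= X](bigID (fun i => i \in S)) /=.
  have -> : \sum_(i in ps | i \in S) x i = \sum_(i in S) x i.
    apply: eq_bigl => i; rewrite andb_idl // => iS.
    by rewrite /ps mem_cat mem1.
  by rewrite lerDl; apply: sumr_ge0.
move=> [x0 Hch]; split => // a b ps aS bS.
case: ps => [|p ps'] pth.
  rewrite big_nil subr_ge0; apply: lam_mono => //.
  by move: pth => /= /andP[c _]; exact: ltW (covers_lt c).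
have e1 := @ML a b (p :: ps') p aS bS pth isT m D HD.
rewrite e1 big_uniq ?(uniq_ps pth) //.
have -> : \sum_(i in p :: ps') x i = \sum_(i in [set i | i \in p :: ps']) x i.
  by apply: eq_bigl => i; rewrite inE.
have so : sorted cov' (p :: ps').
  move: pth; rewrite rcons_path map_cons => /andP[/andP[_ h] _].
  change (is_true (path (@covers d P) (val p) (map val ps'))) in h; by rewrite path_map in h.
apply: Hch => u v; rewrite !inE => us vs; exact: (sorted_chain so us vs).
Qed.

End Main.

Theorem lemma4p1 (R : realFieldType) (d : Order.disp_t) (P : finPOrderType d)
    (Pstar : {set P}) (lam : P -> R) :
  marked_poset Pstar lam ->
  strict_marked Pstar lam ->
  regular_marked Pstar lam ->
  (exists (m : nat) (D : 'I_m -> ineq (unmarked Pstar)),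
      irredundant_description (marked_chain_polytope Pstar lam) D) ->
  exists r : rel (unmarked Pstar),
    is_porder r /\
    forall x : unmarked Pstar -> R,
      marked_chain_polytope Pstar lam x <-> chain_polytope r x.
Proof.
move=> Hmp Hst Hreg HD; exact: (main_sec Hmp Hst Hreg HD).
Qed.
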